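(* On Gauss diagrams of twisted knot diagrams, the forbidden move $F1$ can be realized by a finite sequence of moves $F2$, $T2$ and $T3$, and the forbidden move $F2$ can be realized by a finite sequence of moves $F1$, $T2$ and $T3$. Consequently, in the presence of $T2$ and $T3$, allowing $F1$ is equivalent to allowing $F2$.
   Context: A twisted knot diagram is a virtual knot diagram (an oriented generic immersed circle in the plane whose double points are either classical crossings, carrying over/under information, or virtual crossings, carrying none) which may in addition carry finitely many bars: short segments marked transversally on arcs, away from crossings. Gauss diagram of a twisted knot diagram: an oriented circle (the parametrizing circle of the knot) on which are marked, in the order met when traversing the knot from a basepoint, the two preimages of each classical crossing and one point for each bar. For each classical crossing a chord joins its two preimages, oriented from the overcrossing preimage (the arrowtail) to the undercrossing preimage (the arrowhead), and labelled by the sign $\varepsilon\in\{+,-\}$ of the crossing. Virtual crossings are not recorded. Two marked points (chord endpoints or bars) are called adjacent if no other marked point lies between them on the circle. Moves on Gauss diagrams (each may be applied in either direction): - $T2$: add or remove two adjacent bars. - $T3$: if each endpoint of a chord is immediately preceded and immediately followed by a bar, remove these four bars, reverse the orientation of the chord and change its sign (the Gauss-diagram version of the twisted Reidemeister move in which a classical crossing having a bar on each of its four incident arcs next to the crossing is replaced by the crossing with over- and under-strand exchanged, the four bars being removed). - $F1$: exchange the positions of two adjacent arrowheads of different chords (signs arbitrary). - $F2$: exchange the positions of two adjacent arrowtails of different chords (signs arbitrary). *)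

(* Defs.v *)
From Stdlib Require Import List Arith Relations.
Import ListNotations.

(* A marked point on the parametrizing circle: a bar, or an endpoint of a
   chord.  A chord is identified by a label [c : nat]; its sign [s : bool]
   (true = +, false = -) is recorded on both endpoints.  The arrowtail is the
   overcrossing preimage, the arrowhead the undercrossing preimage. *)
Inductive mark : Type :=
| Bar : mark
| Tail : nat -> bool -> mark
| Head : nat -> bool -> mark.

(* A Gauss diagram is the cyclic word of marked points read from a basepoint;
   the choice of basepoint is immaterial (see [rot]). *)
Definition gauss := list mark.

Definition is_tail (c : nat) (m : mark) : bool :=
  match m with Tail c' _ => Nat.eqb c c' | _ => false end.
Definition is_head (c : nat) (m : mark) : bool :=
  match m with Head c' _ => Nat.eqb c c' | _ => false end.

Definition wf (D : gauss) : Prop :=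
  (forall c, length (filter (is_tail c) D) = length (filter (is_head c) D)
             /\ length (filter (is_tail c) D) <= 1)
  /\ (forall c s s', In (Tail c s) D -> In (Head c s') D -> s = s').

Inductive rot : gauss -> gauss -> Prop :=
| rot_intro l1 l2 : rot (l1 ++ l2) (l2 ++ l1).

Inductive T2 : gauss -> gauss -> Prop :=
| T2_intro l1 l2 : T2 (l1 ++ l2) (l1 ++ Bar :: Bar :: l2).

Inductive T3 : gauss -> gauss -> Prop :=
| T3_th l1 l2 l3 c s :
    T3 (l1 ++ Bar :: Tail c s :: Bar :: l2 ++ Bar :: Head c s :: Bar :: l3)
       (l1 ++ Head c (negb s) :: l2 ++ Tail c (negb s) :: l3)
| T3_ht l1 l2 l3 c s :
    T3 (l1 ++ Bar :: Head c s :: Bar :: l2 ++ Bar :: Tail c s :: Bar :: l3)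
       (l1 ++ Tail c (negb s) :: l2 ++ Head c (negb s) :: l3).

Inductive F1 : gauss -> gauss -> Prop :=
| F1_intro l1 l2 a s b t :
    a <> b ->
    F1 (l1 ++ Head a s :: Head b t :: l2) (l1 ++ Head b t :: Head a s :: l2).

Inductive F2 : gauss -> gauss -> Prop :=
| F2_intro l1 l2 a s b t :
    a <> b ->
    F2 (l1 ++ Tail a s :: Tail b t :: l2) (l1 ++ Tail b t :: Tail a s :: l2).

Definition union4 (R1 R2 R3 R4 : gauss -> gauss -> Prop) : gauss -> gauss -> Prop :=
  fun x y => R1 x y \/ R2 x y \/ R3 x y \/ R4 x y.

Definition equiv_with (F : gauss -> gauss -> Prop) : gauss -> gauss -> Prop :=
  clos_refl_sym_trans gauss (union4 rot F T2 T3).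

(* Main.v *)
Require Import Defs.
From Stdlib Require Import List Relations.
From Stdlib Require Import Arith Lia Bool.
Import ListNotations.

Fixpoint cnt (p : mark -> bool) (l : list mark) : nat :=
  match l with [] => 0 | x :: l' => (if p x then 1 else 0) + cnt p l' end.

Lemma cnt_app p l1 l2 : cnt p (l1 ++ l2) = cnt p l1 + cnt p l2.
Proof. induction l1; simpl; auto. rewrite IHl1; lia. Qed.

Definition tsel c s m := match m with Tail c' s' => Nat.eqb c c' && Bool.eqb s s' | _ => false end.
Definition hsel c s m := match m with Head c' s' => Nat.eqb c c' && Bool.eqb s s' | _ => false end.
Definition Inv (D : gauss) := forall c s, cnt (tsel c s) D = cnt (hsel c s) D.

Lemma cnt_le p q l : (forall m, p m = true -> q m = true) -> cnt p l <= length (filter q l).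
Proof.
  intros H; induction l; simpl; auto.
  destruct (p a) eqn:E. rewrite (H _ E); simpl; lia.
  destruct (q a); simpl; lia.
Qed.

Lemma cnt_t_in c s l : 0 < cnt (tsel c s) l <-> In (Tail c s) l.
Proof.
  induction l; simpl. split; [lia|tauto].
  destruct a as [|c' s'|c' s']; simpl.
  - rewrite IHl; split; [tauto|intros [H|H]; [discriminate|auto]].
  - destruct (Nat.eqb c c') eqn:E1; destruct (Bool.eqb s s') eqn:E2; simpl.
    + apply Nat.eqb_eq in E1; apply eqb_prop in E2; subst; split; auto; lia.
    + rewrite IHl; split; [tauto|intros [H|H]; auto; inversion H; subst;
        rewrite eqb_reflx in E2; discriminate].
    + rewrite IHl; split; [tauto|intros [H|H]; auto; inversion H; subst;
        rewrite Nat.eqb_refl in E1; discriminate].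
    + rewrite IHl; split; [tauto|intros [H|H]; auto; inversion H; subst;
        rewrite Nat.eqb_refl in E1; discriminate].
  - rewrite IHl; split; [tauto|intros [H|H]; [discriminate|auto]].
Qed.

Lemma cnt_h_in c s l : 0 < cnt (hsel c s) l <-> In (Head c s) l.
Proof.
  induction l; simpl. split; [lia|tauto].
  destruct a as [|c' s'|c' s']; simpl.
  - rewrite IHl; split; [tauto|intros [H|H]; [discriminate|auto]].
  - rewrite IHl; split; [tauto|intros [H|H]; [discriminate|auto]].
  - destruct (Nat.eqb c c') eqn:E1; destruct (Bool.eqb s s') eqn:E2; simpl.
    + apply Nat.eqb_eq in E1; apply eqb_prop in E2; subst; split; auto; lia.
    + rewrite IHl; split; [tauto|intros [H|H]; auto; inversion H; subst;
        rewrite eqb_reflx in E2; discriminate].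
    + rewrite IHl; split; [tauto|intros [H|H]; auto; inversion H; subst;
        rewrite Nat.eqb_refl in E1; discriminate].
    + rewrite IHl; split; [tauto|intros [H|H]; auto; inversion H; subst;
        rewrite Nat.eqb_refl in E1; discriminate].
Qed.

Lemma filter_nonempty (q : mark -> bool) l : 0 < length (filter q l) -> exists m, In m l /\ q m = true.
Proof.
  induction l; simpl; [lia|]. destruct (q a) eqn:E.
  - intros _; exists a; auto.
  - intros H; destruct (IHl H) as [m [? ?]]; exists m; auto.
Qed.

Lemma wf_Inv D : wf D -> Inv D.
Proof.
  intros [H1 H2] c s.
  destruct (H1 c) as [Heq Hle].
  assert (Ht : cnt (tsel c s) D <= length (filter (is_tail c) D)).
  { apply cnt_le. intros [|c' s'|c' s']; simpl; try discriminate.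
    intros H; apply andb_prop in H; tauto. }
  assert (Hh : cnt (hsel c s) D <= length (filter (is_head c) D)).
  { apply cnt_le. intros [|c' s'|c' s']; simpl; try discriminate.
    intros H; apply andb_prop in H; tauto. }
  assert (A : In (Tail c s) D <-> In (Head c s) D).
  { split; intros HI.
    - assert (0 < length (filter (is_head c) D)).
      { rewrite <- Heq. apply Nat.lt_le_trans with (cnt (tsel c s) D); auto.
        apply cnt_t_in; auto. }
      destruct (filter_nonempty _ _ H) as [[|c' s'|c' s'] [Hin Hq]]; simpl in Hq; try discriminate.
      apply Nat.eqb_eq in Hq; subst. rewrite (H2 _ _ _ HI Hin); auto.
    - assert (0 < length (filter (is_tail c) D)).
      { rewrite Heq. apply Nat.lt_le_trans with (cnt (hsel c s) D); auto.
        apply cnt_h_in; auto. }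
      destruct (filter_nonempty _ _ H) as [[|c' s'|c' s'] [Hin Hq]]; simpl in Hq; try discriminate.
      apply Nat.eqb_eq in Hq; subst. rewrite <- (H2 _ _ _ Hin HI); auto. }
  pose proof (cnt_t_in c s D). pose proof (cnt_h_in c s D).
  destruct (cnt (tsel c s) D) as [|[|]]; destruct (cnt (hsel c s) D) as [|[|]]; try lia.
  - exfalso. assert (0 < 0); [apply H; apply A, H0; lia| lia].
  - exfalso. assert (0 < 0); [apply H0; apply A, H; lia| lia].
Qed.

Lemma rot_cnt x y : rot x y -> forall p, cnt p x = cnt p y.
Proof. intros []; intros; rewrite !cnt_app; lia. Qed.
Lemma F1_cnt x y : F1 x y -> forall p, cnt p x = cnt p y.
Proof. intros []; intros; rewrite !cnt_app; simpl; lia. Qed.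
Lemma F2_cnt x y : F2 x y -> forall p, cnt p x = cnt p y.
Proof. intros []; intros; rewrite !cnt_app; simpl; lia. Qed.

Lemma cnt_Inv x y : (forall p, cnt p x = cnt p y) -> (Inv x <-> Inv y).
Proof. intros H; unfold Inv; split; intros H' c s.
  - rewrite <- !H; auto.
  - rewrite !H; auto. Qed.

Lemma T2_Inv x y : T2 x y -> (Inv x <-> Inv y).
Proof. intros []; unfold Inv; split; intros H c s; specialize (H c s);
  rewrite !cnt_app in *; simpl in *; lia. Qed.

Lemma T3_Inv x y : T3 x y -> (Inv x <-> Inv y).
Proof. intros []; unfold Inv; split; intros H c0 s0; specialize (H c0 s0);
  repeat (rewrite !cnt_app in *; simpl in * );
  destruct (Nat.eqb c0 c), s0, s; simpl in *; lia. Qed.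

Lemma step_Inv F : (forall x y, F x y -> forall p, cnt p x = cnt p y) ->
  forall x y, union4 rot F T2 T3 x y -> (Inv x <-> Inv y).
Proof.
  intros HF x y [H|[H|[H|H]]].
  - apply cnt_Inv, rot_cnt; auto.
  - apply cnt_Inv, HF; auto.
  - apply T2_Inv; auto.
  - apply T3_Inv; auto.
Qed.

Lemma rst_Inv F : (forall x y, F x y -> forall p, cnt p x = cnt p y) ->
  forall x y, equiv_with F x y -> (Inv x <-> Inv y).
Proof.
  intros HF x y H; induction H.
  - eapply step_Inv; eauto.
  - tauto.
  - tauto.
  - tauto.
Qed.

Lemma transfer F G : (forall x y, F x y -> forall p, cnt p x = cnt p y) ->
  (forall x y, Inv x -> F x y -> equiv_with G x y) ->
  forall x y, equiv_with F x y -> Inv x -> equiv_with G x y.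
Proof.
  intros HF HS x y H; induction H; intros Hx.
  - destruct H as [H|[H|[H|H]]].
    + apply rst_step; left; auto.
    + apply HS; auto.
    + apply rst_step; right; right; left; auto.
    + apply rst_step; right; right; right; auto.
  - apply rst_refl.
  - apply rst_sym, IHclos_refl_sym_trans.
    apply (rst_Inv F HF _ _ H); auto.
  - eapply rst_trans. apply IHclos_refl_sym_trans1; auto.
    apply IHclos_refl_sym_trans2. apply (rst_Inv F HF _ _ H); auto.
Qed.

Section Steps.
Variable F : gauss -> gauss -> Prop.
Lemma sT3 x y x' y' : T3 x y -> x' = x -> y' = y -> equiv_with F x' y'.
Proof. intros H -> ->; apply rst_step; right; right; right; auto. Qed.
Lemma sT3r x y x' y' : T3 x y -> x' = y -> y' = x -> equiv_with F x' y'.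
Proof. intros H -> ->; apply rst_sym, rst_step; right; right; right; auto. Qed.
Lemma sT2 x y x' y' : T2 x y -> x' = x -> y' = y -> equiv_with F x' y'.
Proof. intros H -> ->; apply rst_step; right; right; left; auto. Qed.
Lemma sT2r x y x' y' : T2 x y -> x' = y -> y' = x -> equiv_with F x' y'.
Proof. intros H -> ->; apply rst_sym, rst_step; right; right; left; auto. Qed.
Lemma sF x y x' y' : F x y -> x' = x -> y' = y -> equiv_with F x' y'.
Proof. intros H -> ->; apply rst_step; right; left; auto. Qed.
Lemma sRot x y x' y' : rot x y -> x' = x -> y' = y -> equiv_with F x' y'.
Proof. intros H -> ->; apply rst_step; left; auto. Qed.
End Steps.

Lemma T3_th' l1 l2 l3 c s : T3 (l1 ++ Bar :: Tail c (negb s) :: Bar :: l2 ++ Bar :: Head c (negb s) :: Bar :: l3)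
  (l1 ++ Head c s :: l2 ++ Tail c s :: l3).
Proof. pose proof (T3_th l1 l2 l3 c (negb s)) as H; rewrite negb_involutive in H; exact H. Qed.
Lemma T3_ht' l1 l2 l3 c s : T3 (l1 ++ Bar :: Head c (negb s) :: Bar :: l2 ++ Bar :: Tail c (negb s) :: Bar :: l3)
  (l1 ++ Tail c s :: l2 ++ Head c s :: l3).
Proof. pose proof (T3_ht l1 l2 l3 c (negb s)) as H; rewrite negb_involutive in H; exact H. Qed.

Ltac lnorm := simpl; repeat (rewrite <- app_assoc; simpl); reflexivity.

Lemma coreA a b s t P Q S : a <> b ->
  equiv_with F2 (Head a s :: Head b t :: P ++ Tail a s :: Q ++ Tail b t :: S)
                (Head b t :: Head a s :: P ++ Tail a s :: Q ++ Tail b t :: S).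
Proof.
  intros Hab.
  eapply rst_trans. { eapply sT3r. apply (T3_th' [] (Head b t :: P) (Q ++ Tail b t :: S) a s). lnorm. lnorm. }
  eapply rst_trans. { eapply sT3r. apply (T3_th' [Bar; Tail a (negb s); Bar] (P ++ Bar :: Head a (negb s) :: Bar :: Q) S b t). lnorm. lnorm. }
  set (rest := P ++ Bar :: Head a (negb s) :: Bar :: Q ++ Bar :: Head b (negb t) :: Bar :: S).
  eapply rst_trans. { eapply sT2r. apply (T2_intro [Bar; Tail a (negb s)] (Tail b (negb t) :: Bar :: rest)). subst rest; lnorm. lnorm. }
  eapply rst_trans. { eapply sF. apply (F2_intro [Bar] (Bar :: rest) a (negb s) b (negb t) Hab). lnorm. lnorm. }
  eapply rst_trans. { eapply sT2. apply (T2_intro [Bar; Tail b (negb t)] (Tail a (negb s) :: Bar :: rest)). lnorm. lnorm. }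
  eapply rst_trans. { eapply sT3. apply (T3_th' [] (Bar :: Tail a (negb s) :: Bar :: P ++ Bar :: Head a (negb s) :: Bar :: Q) S b t). subst rest; lnorm. lnorm. }
  eapply sT3. apply (T3_th' [Head b t] P (Q ++ Tail b t :: S) a s). lnorm. lnorm.
Qed.

Lemma coreB a b s t P Q S : a <> b ->
  equiv_with F2 (Head a s :: Head b t :: P ++ Tail b t :: Q ++ Tail a s :: S)
                (Head b t :: Head a s :: P ++ Tail b t :: Q ++ Tail a s :: S).
Proof.
  intros Hab.
  eapply rst_trans. { eapply sT3r. apply (T3_th' [] (Head b t :: P ++ Tail b t :: Q) S a s). lnorm. lnorm. }
  eapply rst_trans. { eapply sT3r. apply (T3_th' [Bar; Tail a (negb s); Bar] P (Q ++ Bar :: Head a (negb s) :: Bar :: S) b t). lnorm. lnorm. }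
  set (rest := P ++ Bar :: Head b (negb t) :: Bar :: Q ++ Bar :: Head a (negb s) :: Bar :: S).
  eapply rst_trans. { eapply sT2r. apply (T2_intro [Bar; Tail a (negb s)] (Tail b (negb t) :: Bar :: rest)). subst rest; lnorm. lnorm. }
  eapply rst_trans. { eapply sF. apply (F2_intro [Bar] (Bar :: rest) a (negb s) b (negb t) Hab). lnorm. lnorm. }
  eapply rst_trans. { eapply sT2. apply (T2_intro [Bar; Tail b (negb t)] (Tail a (negb s) :: Bar :: rest)). lnorm. lnorm. }
  eapply rst_trans. { eapply sT3. apply (T3_th' [] (Bar :: Tail a (negb s) :: Bar :: P) (Q ++ Bar :: Head a (negb s) :: Bar :: S) b t). subst rest; lnorm. lnorm. }
  eapply sT3. apply (T3_th' [Head b t] (P ++ Tail b t :: Q) S a s). lnorm. lnorm.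
Qed.

Lemma coreA' a b s t P Q S : a <> b ->
  equiv_with F1 (Tail a s :: Tail b t :: P ++ Head a s :: Q ++ Head b t :: S)
                (Tail b t :: Tail a s :: P ++ Head a s :: Q ++ Head b t :: S).
Proof.
  intros Hab.
  eapply rst_trans. { eapply sT3r. apply (T3_ht' [] (Tail b t :: P) (Q ++ Head b t :: S) a s). lnorm. lnorm. }
  eapply rst_trans. { eapply sT3r. apply (T3_ht' [Bar; Head a (negb s); Bar] (P ++ Bar :: Tail a (negb s) :: Bar :: Q) S b t). lnorm. lnorm. }
  set (rest := P ++ Bar :: Tail a (negb s) :: Bar :: Q ++ Bar :: Tail b (negb t) :: Bar :: S).
  eapply rst_trans. { eapply sT2r. apply (T2_intro [Bar; Head a (negb s)] (Head b (negb t) :: Bar :: rest)). subst rest; lnorm. lnorm. }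
  eapply rst_trans. { eapply sF. apply (F1_intro [Bar] (Bar :: rest) a (negb s) b (negb t) Hab). lnorm. lnorm. }
  eapply rst_trans. { eapply sT2. apply (T2_intro [Bar; Head b (negb t)] (Head a (negb s) :: Bar :: rest)). lnorm. lnorm. }
  eapply rst_trans. { eapply sT3. apply (T3_ht' [] (Bar :: Head a (negb s) :: Bar :: P ++ Bar :: Tail a (negb s) :: Bar :: Q) S b t). subst rest; lnorm. lnorm. }
  eapply sT3. apply (T3_ht' [Tail b t] P (Q ++ Head b t :: S) a s). lnorm. lnorm.
Qed.

Lemma coreB' a b s t P Q S : a <> b ->
  equiv_with F1 (Tail a s :: Tail b t :: P ++ Head b t :: Q ++ Head a s :: S)
                (Tail b t :: Tail a s :: P ++ Head b t :: Q ++ Head a s :: S).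
Proof.
  intros Hab.
  eapply rst_trans. { eapply sT3r. apply (T3_ht' [] (Tail b t :: P ++ Head b t :: Q) S a s). lnorm. lnorm. }
  eapply rst_trans. { eapply sT3r. apply (T3_ht' [Bar; Head a (negb s); Bar] P (Q ++ Bar :: Tail a (negb s) :: Bar :: S) b t). lnorm. lnorm. }
  set (rest := P ++ Bar :: Tail b (negb t) :: Bar :: Q ++ Bar :: Tail a (negb s) :: Bar :: S).
  eapply rst_trans. { eapply sT2r. apply (T2_intro [Bar; Head a (negb s)] (Head b (negb t) :: Bar :: rest)). subst rest; lnorm. lnorm. }
  eapply rst_trans. { eapply sF. apply (F1_intro [Bar] (Bar :: rest) a (negb s) b (negb t) Hab). lnorm. lnorm. }
  eapply rst_trans. { eapply sT2. apply (T2_intro [Bar; Head b (negb t)] (Head a (negb s) :: Bar :: rest)). lnorm. lnorm. }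
  eapply rst_trans. { eapply sT3. apply (T3_ht' [] (Bar :: Head a (negb s) :: Bar :: P) (Q ++ Bar :: Tail a (negb s) :: Bar :: S) b t). subst rest; lnorm. lnorm. }
  eapply sT3. apply (T3_ht' [Tail b t] (P ++ Head b t :: Q) S a s). lnorm. lnorm.
Qed.

Lemma inv_tail D c s : Inv D -> In (Head c s) D -> In (Tail c s) D.
Proof. intros H Hi. apply cnt_t_in. rewrite H. apply cnt_h_in; auto. Qed.
Lemma inv_head D c s : Inv D -> In (Tail c s) D -> In (Head c s) D.
Proof. intros H Hi. apply cnt_h_in. rewrite <- H. apply cnt_t_in; auto. Qed.

Lemma sim1 D D' : Inv D -> F1 D D' -> equiv_with F2 D D'.
Proof.
  intros HI HF; revert HI; destruct HF as [l1 l2 a s b t Hab]; intros HI.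
  assert (Ha : In (Tail a s) (l2 ++ l1)).
  { assert (H := inv_tail _ a s HI ltac:(apply in_or_app; simpl; auto)).
    apply in_app_or in H; apply in_or_app; simpl in H.
    destruct H as [H|[H|[H|H]]]; try discriminate; auto. }
  assert (Hb : In (Tail b t) (l2 ++ l1)).
  { assert (H := inv_tail _ b t HI ltac:(apply in_or_app; simpl; auto)).
    apply in_app_or in H; apply in_or_app; simpl in H.
    destruct H as [H|[H|[H|H]]]; try discriminate; auto. }
  eapply rst_trans. { eapply sRot. apply (rot_intro l1 (Head a s :: Head b t :: l2)). reflexivity. reflexivity. }
  eapply rst_trans with (y := Head b t :: Head a s :: l2 ++ l1).
  2: { eapply sRot. apply (rot_intro (Head b t :: Head a s :: l2) l1). reflexivity. reflexivity. }
  simpl. revert Ha Hb. generalize (l2 ++ l1). intros M Ha Hb.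
  destruct (in_split _ _ Ha) as [P [R ->]].
  apply in_app_or in Hb. destruct Hb as [Hb|[Hb|Hb]].
  - destruct (in_split _ _ Hb) as [P1 [P2 ->]].
    rewrite <- app_assoc. simpl. apply coreB; auto.
  - inversion Hb; congruence.
  - destruct (in_split _ _ Hb) as [Q [S ->]].
    apply coreA; auto.
Qed.

Lemma sim2 D D' : Inv D -> F2 D D' -> equiv_with F1 D D'.
Proof.
  intros HI HF; revert HI; destruct HF as [l1 l2 a s b t Hab]; intros HI.
  assert (Ha : In (Head a s) (l2 ++ l1)).
  { assert (H := inv_head _ a s HI ltac:(apply in_or_app; simpl; auto)).
    apply in_app_or in H; apply in_or_app; simpl in H.
    destruct H as [H|[H|[H|H]]]; try discriminate; auto. }
  assert (Hb : In (Head b t) (l2 ++ l1)).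
  { assert (H := inv_head _ b t HI ltac:(apply in_or_app; simpl; auto)).
    apply in_app_or in H; apply in_or_app; simpl in H.
    destruct H as [H|[H|[H|H]]]; try discriminate; auto. }
  eapply rst_trans. { eapply sRot. apply (rot_intro l1 (Tail a s :: Tail b t :: l2)). reflexivity. reflexivity. }
  eapply rst_trans with (y := Tail b t :: Tail a s :: l2 ++ l1).
  2: { eapply sRot. apply (rot_intro (Tail b t :: Tail a s :: l2) l1). reflexivity. reflexivity. }
  simpl. revert Ha Hb. generalize (l2 ++ l1). intros M Ha Hb.
  destruct (in_split _ _ Ha) as [P [R ->]].
  apply in_app_or in Hb. destruct Hb as [Hb|[Hb|Hb]].
  - destruct (in_split _ _ Hb) as [P1 [P2 ->]].
    rewrite <- app_assoc. simpl. apply coreB'; auto.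
  - inversion Hb; congruence.
  - destruct (in_split _ _ Hb) as [Q [S ->]].
    apply coreA'; auto.
Qed.

Theorem mainTheorem3 :
  (forall D D', wf D -> F1 D D' -> equiv_with F2 D D')
  /\ (forall D D', wf D -> F2 D D' -> equiv_with F1 D D')
  /\ (forall D D', wf D -> (equiv_with F1 D D' <-> equiv_with F2 D D')).
Proof.
  split; [|split].
  - intros D D' H; apply sim1, wf_Inv; auto.
  - intros D D' H; apply sim2, wf_Inv; auto.
  - intros D D' H; split; intros He.
    + apply (transfer F1 F2 F1_cnt sim1); auto; apply wf_Inv; auto.
    + apply (transfer F2 F1 F2_cnt sim2); auto; apply wf_Inv; auto.
Qed.
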